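(* Fix $\theta\in(0,1]$. For every integer $k\ge1$, $$\sup\Big\{\sup_{x\in\mathbb X}\frac{|(\widehat P_kf)(x)-(Pf)(x)|}{V(x)}:\ f:\mathbb X\to\mathbb C\ \text{measurable},\ \sup_{\mathbb X}|f|\le1\Big\}\ \le\ \tau_k:=2\max\Big(\frac1{v(k)},\ \alpha_k+\ell_{k,\theta}\,\delta_k^{\theta}\Big).$$
   Context: Let $(\mathbb X,d)$ be a metric space with Borel $\sigma$-algebra $\mathcal X$, $\mu$ a positive measure, and $P$ a Markov kernel $P(x,dy)=p(x,y)\,\mu(dy)$ with $p:\mathbb X^2\to[0,\infty)$ measurable, $\int p(x,y)\mu(dy)=1$; $(Pf)(x)=\int f(y)p(x,y)\mu(dy)$. Fix $x_0\in\mathbb X$. Let $v:[0,\infty)\to[1,\infty)$ be unbounded, increasing, continuous with $v(0)=1$, and $V(x):=v(d(x,x_0))$. For each integer $k\ge1$: $\delta_k>0$; $\mathbb X_k\in\mathcal X$ with $\{d(x,x_0)<k\}\subseteq\mathbb X_k\subseteq\{d(x,x_0)\le k\}$; $\{\mathbb X_{i,k}\}_{i\in I_k}$ a finite family of pairwise disjoint nonempty measurable sets with union $\mathbb X_k$ and $\mathrm{diam}(\mathbb X_{i,k})\le\delta_k$. Define $m_{i,k}(f):=\int_{\mathbb X_k}f(y)\inf_{t\in\mathbb X_{i,k}}p(t,y)\,\mu(dy)$, $(\widehat Q_kf)(x):=\sum_{i\in I_k}m_{i,k}(f)1_{\mathbb X_{i,k}}(x)$, $\psi_k:=1_{\mathbb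 X}-\widehat Q_k1_{\mathbb X}$, $\widehat P_kf:=\widehat Q_kf+f(x_0)\psi_k$. Let $\alpha_k:=\sup_{u\in\mathbb X_k}P(u,\mathbb X\setminus\mathbb X_k)/V(u)$, $L_{i,k,\theta}(y):=\sup\{|p(x,y)-p(x',y)|/d(x,x')^\theta:\ x,x'\in\mathbb X_{i,k},\ x\ne x'\}\in[0,\infty]$ for $y\in\mathbb X_k$, and $\ell_{k,\theta}:=\max_{i\in I_k}\int_{\mathbb X_k}L_{i,k,\theta}(y)\,\mu(dy)\in[0,\infty]$. *)

(* Defs.v *)
From HB Require Import structures.
From mathcomp Require Import all_boot all_order all_algebra.
From mathcomp Require Import all_classical all_reals all_analysis.
From mathcomp Require Import complex.
Set Implicit Arguments. Unset Strict Implicit. Unset Printing Implicit Defensive.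
Import Order.TTheory GRing.Theory Num.Theory.
Import ComplexField.
Local Open Scope classical_set_scope.
Local Open Scope ring_scope.
Local Open Scope complex_scope.

Section Defs.
Context {dsp : measure_display} {X : measurableType dsp} {R : realType}.

Definition is_metric (d : X -> X -> R) : Prop :=
  [/\ forall x y, 0 <= d x y,
      forall x y, d x y = 0 <-> x = y,
      forall x y, d x y = d y x &
      forall x y z, d x z <= d x y + d y z].

Definition dopen (d : X -> X -> R) (A : set X) : Prop :=
  forall x, A x -> exists e : R, 0 < e /\ forall y, d x y < e -> A y.

Definition is_borel (d : X -> X -> R) : Prop :=
  forall A : set X, measurable A <-> <<s [set B | dopen d B] >> A.

(** measurability of a complex-valued function (Borel sets of C = R^2) *)
Definition cmeasurable (f : X -> R[i]) : Prop :=
  measurable_fun setT (fun x => complex.Re (f x)) /\ measurable_fun setT (fun x => complex.Im (f x)).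

Definition cintegral (mu : {measure set X -> \bar R}) (D : set X)
  (f : X -> R[i]) : R[i] :=
  Complex (Rintegral mu D (fun y => complex.Re (f y))) (Rintegral mu D (fun y => complex.Im (f y))).

Definition Pop (mu : {measure set X -> \bar R}) (p : X -> X -> R)
  (f : X -> R[i]) (x : X) : R[i] :=
  cintegral mu setT (fun y => f y * (p x y)%:C).

Definition Pker (mu : {measure set X -> \bar R}) (p : X -> X -> R)
  (u : X) (A : set X) : \bar R :=
  (\int[mu]_(y in A) (p u y)%:E)%E.

Definition pinf (p : X -> X -> R) (A : set X) (y : X) : R :=
  inf [set p t y | t in A].

Definition mik (mu : {measure set X -> \bar R}) (p : X -> X -> R)
  (Xk Xik : set X) (f : X -> R[i]) : R[i] :=
  cintegral mu Xk (fun y => f y * (pinf p Xik y)%:C).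

Definition Qhat (I : finType) (mu : {measure set X -> \bar R}) (p : X -> X -> R)
  (Xk : set X) (part : I -> set X) (f : X -> R[i]) (x : X) : R[i] :=
  \sum_(i : I) mik mu p Xk (part i) f * (\1_(part i) x : R)%:C.

Definition psi (I : finType) (mu : {measure set X -> \bar R}) (p : X -> X -> R)
  (Xk : set X) (part : I -> set X) (x : X) : R[i] :=
  1 - Qhat mu p Xk part (fun _ => 1) x.

Definition Phat (I : finType) (mu : {measure set X -> \bar R}) (p : X -> X -> R)
  (Xk : set X) (part : I -> set X) (x0 : X) (f : X -> R[i]) (x : X) : R[i] :=
  Qhat mu p Xk part f x + f x0 * psi mu p Xk part x.

(** L_{i,k,theta}(y) in [0, +oo]; the supremum of the empty set
    (X_{i,k} a singleton) is taken as 0, all other values being >= 0 *)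
Definition Lik (d : X -> X -> R) (p : X -> X -> R) (Xik : set X) (theta : R)
  (y : X) : \bar R :=
  ereal_sup ([set 0%E] `|`
    [set z | exists x x', [/\ Xik x, Xik x', x <> x' &
        z = (`|p x y - p x' y| / (d x x') `^ theta)%:E] ]).

Definition ell (I : finType) (mu : {measure set X -> \bar R}) (d : X -> X -> R)
  (p : X -> X -> R) (Xk : set X) (part : I -> set X) (theta : R) : \bar R :=
  \big[maxe/0%E]_(i : I) (\int[mu]_(y in Xk) Lik d p (part i) theta y)%E.

Definition alpha (mu : {measure set X -> \bar R}) (p : X -> X -> R)
  (V : X -> R) (Xk : set X) : \bar R :=
  ereal_sup [set (Pker mu p u (~` Xk) * ((V u)^-1)%:E)%E | u in Xk].

End Defs.

(* Main.v *)
Require Import Defs.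
From HB Require Import structures.
From mathcomp Require Import all_boot all_order all_algebra.
From mathcomp Require Import all_classical all_reals all_analysis.
From mathcomp Require Import complex.
From mathcomp Require Import ring lra.
Import Order.TTheory GRing.Theory Num.Theory.
Import ComplexField.
Import numFieldTopology.Exports numFieldNormedType.Exports.
Local Open Scope classical_set_scope.
Local Open Scope ring_scope.
Local Open Scope complex_scope.

Section Helpers.
Context {dsp : measure_display} {X : measurableType dsp} {R : realType}.
Variable mu : {measure set X -> \bar R}.

Lemma nn_le_integral (D : set X) (f g : X -> \bar R) :
  (forall x, D x -> (0 <= f x)%E) -> (forall x, D x -> (f x <= g x)%E) ->
  (\int[mu]_(x in D) f x <= \int[mu]_(x in D) g x)%E.
Proof.
move=> f0 fg.
have g0 : forall x, D x -> (0 <= g x)%E.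
  by move=> x Dx; apply: le_trans (f0 _ Dx) (fg _ Dx).
rewrite (ge0_integralE mu f0) (ge0_integralE mu g0) /=.
apply: ereal_sup_le => _ [h hf <-]; exists h => //= y.
exact: le_trans (hf y) (lee_restrict fg y).
Qed.

Definition lf (a b : R) (z : R[i]) : R := a * complex.Re z + b * complex.Im z.

Lemma lf_le (a b : R) (z : R[i]) : a ^+ 2 + b ^+ 2 <= 1 -> lf a b z <= Normc.normc z.
Proof.
case: z => x y /= ab; rewrite /lf /=.
have [le0|gt0] := lerP (a * x + b * y) 0.
  by apply: le_trans le0 _; exact: sqrtr_ge0.
rewrite -(ger0_norm (ltW gt0)) -sqrtr_sqr.
apply: ler_wsqrtr.
have h1 : (a * x + b * y) ^+ 2 <= (a ^+ 2 + b ^+ 2) * (x ^+ 2 + y ^+ 2).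
  have : 0 <= (a * y - b * x) ^+ 2 by exact: sqr_ge0.
  move=> H; rewrite -subr_ge0; apply: le_trans H _.
  by rewrite le_eqVlt; apply/orP; left; apply/eqP; ring.
apply: le_trans h1 _.
have h2 : 0 <= x ^+ 2 + y ^+ 2 by rewrite addr_ge0 // sqr_ge0.
by rewrite -[leRHS]mul1r ler_wpM2r.
Qed.

Lemma lf_attain (z : R[i]) : exists a b : R,
  a ^+ 2 + b ^+ 2 <= 1 /\ Normc.normc z = lf a b z.
Proof.
case: z => x y; rewrite /lf /=.
set n := Num.sqrt (x ^+ 2 + y ^+ 2).
have h2 : 0 <= x ^+ 2 + y ^+ 2 by rewrite addr_ge0 // sqr_ge0.
have hn2 : n ^+ 2 = x ^+ 2 + y ^+ 2 by rewrite sqr_sqrtr.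
have [n0|npos] := eqVneq n 0.
  exists 0, 0; split; first by rewrite expr0n /= addr0 ler01.
  by rewrite n0 !mul0r addr0.
exists (x / n), (y / n); split.
  rewrite !expr_div_n -mulrDl -hn2 divff // expf_neq0 //.
rewrite /= -!mulrA [n^-1 * _]mulrC [n^-1 * y]mulrC !mulrA -mulrDl.
by rewrite -!expr2 -hn2 expr2 mulfK.
Qed.


Lemma Rint_dom (D : set X) (f g : X -> R) : measurable D ->
  measurable_fun D f -> mu.-integrable D (EFin \o g) ->
  (forall y, D y -> `|f y| <= `|g y|) -> mu.-integrable D (EFin \o f).
Proof.
move=> mD mf ig fg; apply: (le_integrable mD _ _ ig).
- exact/measurable_realfun.measurable_EFinP.
- by move=> y Dy /=; rewrite lee_fin; exact: fg.
Qed.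

Lemma Rint_scale (D : set X) (f : X -> R) (r : R) : measurable D ->
  mu.-integrable D (EFin \o f) -> mu.-integrable D (EFin \o (fun y => r * f y)).
Proof.
move=> mD i; apply: (eq_integrable mD _ _ _ (integrableZl mD r i)).
by move=> y _ /=; rewrite EFinM.
Qed.

Lemma Rint_add (D : set X) (f g : X -> R) : measurable D ->
  mu.-integrable D (EFin \o f) -> mu.-integrable D (EFin \o g) ->
  mu.-integrable D (EFin \o (fun y => f y + g y)).
Proof.
move=> mD i1 i2; apply: (eq_integrable mD _ _ _ (integrableD mD i1 i2)).
by move=> y _ /=; rewrite EFinD.
Qed.

Lemma Rint_sub (D : set X) (f g : X -> R) : measurable D ->
  mu.-integrable D (EFin \o f) -> mu.-integrable D (EFin \o g) ->
  mu.-integrable D (EFin \o (fun y => f y - g y)).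
Proof.
move=> mD i1 i2; apply: (eq_integrable mD _ _ _ (integrableB mD i1 i2)).
by move=> y _ /=; rewrite EFinB.
Qed.

Lemma lf_cint (a b : R) (D : set X) (g : X -> R[i]) : measurable D ->
  mu.-integrable D (EFin \o (fun y => complex.Re (g y))) ->
  mu.-integrable D (EFin \o (fun y => complex.Im (g y))) ->
  lf a b (cintegral mu D g) = Rintegral mu D (fun y => lf a b (g y)).
Proof.
move=> mD i1 i2; rewrite /lf /cintegral /=.
rewrite -(RintegralZl a mD i1) -(RintegralZl b mD i2) -RintegralD //.
- exact: Rint_scale.
- exact: Rint_scale.
Qed.

Lemma lfD a b (z1 z2 : R[i]) : lf a b (z1 + z2) = lf a b z1 + lf a b z2.
Proof. by case: z1 => ? ?; case: z2 => ? ?; rewrite /lf /=; ring. Qed.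

Lemma lfB a b (z1 z2 : R[i]) : lf a b (z1 - z2) = lf a b z1 - lf a b z2.
Proof. by case: z1 => ? ?; case: z2 => ? ?; rewrite /lf /=; ring. Qed.

Lemma lfMC a b (z : R[i]) (r : R) : lf a b (z * r%:C) = lf a b z * r.
Proof. by case: z => ? ?; rewrite /lf /=; ring. Qed.

Lemma ReMC (z : R[i]) (r : R) : complex.Re (z * r%:C) = complex.Re z * r.
Proof. by case: z => ? ? /=; ring. Qed.

Lemma ImMC (z : R[i]) (r : R) : complex.Im (z * r%:C) = complex.Im z * r.
Proof. by case: z => ? ? /=; ring. Qed.


Lemma Rint_bdd (D : set X) (phi psi : X -> R) : measurable D -> measurable_fun D phi ->
  (forall y, D y -> `|phi y| <= 1) -> mu.-integrable D (EFin \o psi) ->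
  mu.-integrable D (EFin \o (fun y => phi y * psi y)).
Proof.
move=> mD mphi hphi ipsi; apply: (@Rint_dom D _ psi mD _ ipsi).
- apply: measurable_realfun.measurable_funM => //.
  exact/measurable_realfun.measurable_EFinP/(measurable_int mu ipsi).
- move=> y Dy; rewrite normrM -[leRHS]mul1r; apply: ler_wpM2r => //.
  exact: hphi.
Qed.

Lemma Re_le (z : R[i]) : `|complex.Re z| <= Normc.normc z.
Proof.
rewrite ler_norml; apply/andP; split.
- rewrite lerNl; have := @lf_le (-1) 0 z; rewrite /lf => H.
  apply: le_trans (H _); first by rewrite mulN1r mul0r addr0.
  by rewrite expr0n /= addr0 sqrrN expr1n.
- have := @lf_le 1 0 z; rewrite /lf => H.
  apply: le_trans (H _); first by rewrite mul1r mul0r addr0.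
  by rewrite expr0n /= addr0 expr1n.
Qed.

Lemma Im_le (z : R[i]) : `|complex.Im z| <= Normc.normc z.
Proof.
rewrite ler_norml; apply/andP; split.
- rewrite lerNl; have := @lf_le 0 (-1) z; rewrite /lf => H.
  apply: le_trans (H _); first by rewrite mulN1r mul0r add0r.
  by rewrite expr0n /= add0r sqrrN expr1n.
- have := @lf_le 0 1 z; rewrite /lf => H.
  apply: le_trans (H _); first by rewrite mul1r mul0r add0r.
  by rewrite expr0n /= add0r expr1n.
Qed.

Lemma lf_cint_mul a b (D : set X) (f : X -> R[i]) (psi : X -> R) :
  measurable D -> cmeasurable f ->
  (forall y, Normc.normc (f y) <= 1) -> mu.-integrable D (EFin \o psi) ->
  lf a b (cintegral mu D (fun y => f y * (psi y)%:C)) =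
  Rintegral mu D (fun y => lf a b (f y) * psi y).
Proof.
move=> mD [mre mim] f1 ipsi; rewrite lf_cint //.
- by apply: eq_Rintegral => y _; rewrite lfMC.
- apply: (eq_integrable mD (EFin \o (fun y => complex.Re (f y) * psi y))).
    by move=> y _ /=; rewrite ReMC.
  apply: Rint_bdd => //; first exact: measurable_funS mre.
  by move=> y _; apply: le_trans (Re_le _) (f1 y).
- apply: (eq_integrable mD (EFin \o (fun y => complex.Im (f y) * psi y))).
    by move=> y _ /=; rewrite ImMC.
  apply: Rint_bdd => //; first exact: measurable_funS mim.
  by move=> y _; apply: le_trans (Im_le _) (f1 y).
Qed.

Lemma bnd_mul (h s : R) : `|h| <= 1 -> 0 <= s -> - s <= h * s <= s.
Proof.
rewrite ler_norml => /andP[h1 h2] s0.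
apply/andP; split; nra.
Qed.

Lemma mulC1 (z : R[i]) : z * (1 : R)%:C = z.
Proof. by case: z => a b; rewrite /GRing.mul /= !mulr1 !mulr0 subr0 add0r. Qed.

Lemma mulC0 (z : R[i]) : z * (0 : R)%:C = 0.
Proof. by case: z => a b; rewrite /GRing.mul /= !mulr0 subr0 addr0. Qed.


Lemma lf_psi a b (z : R[i]) (r : R) : lf a b (z * (1 - r%:C)) = lf a b z * (1 - r).
Proof. by case: z => ? ?; rewrite /lf /=; ring. Qed.

End Helpers.

Theorem lemma2 (dsp : measure_display) (X : measurableType dsp) (R : realType)
  (d : X -> X -> R) (mu : {measure set X -> \bar R}) (p : X -> X -> R)
  (x0 : X) (v : R -> R) (delta : nat -> R) (Xk : nat -> set X)
  (I : nat -> finType) (part : forall k : nat, I k -> set X) (theta : R) :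
  (* (X,d) metric space with its Borel sigma-algebra *)
  is_metric d -> is_borel d ->
  (* Markov kernel with density p w.r.t. the positive measure mu *)
  measurable_fun setT (fun xy : X * X => p xy.1 xy.2) ->
  (forall x y, 0 <= p x y) ->
  (forall x, (\int[mu]_(y in setT) (p x y)%:E = 1)%E) ->
  (* v : [0,oo) -> [1,oo) unbounded, increasing, continuous, v 0 = 1 *)
  v 0 = 1 ->
  (forall t, 0 <= t -> 1 <= v t) ->
  (forall s t, 0 <= s -> s <= t -> v s <= v t) ->
  {within [set t : R | 0 <= t], continuous v} ->
  (forall M : R, exists t, 0 <= t /\ M < v t) ->
  (* the sets X_k and their finite partitions X_{i,k} *)
  (forall k : nat, (1 <= k)%N -> 0 < delta k) ->
  (forall k : nat, (1 <= k)%N ->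
     [/\ measurable (Xk k),
         [set x | d x x0 < k%:R] `<=` Xk k &
         Xk k `<=` [set x | d x x0 <= k%:R] ]) ->
  (forall (k : nat) (i : I k), (1 <= k)%N ->
     [/\ measurable (part k i), part k i !=set0 &
         forall x x', part k i x -> part k i x' -> d x x' <= delta k ]) ->
  (forall (k : nat) (i j : I k), (1 <= k)%N -> i <> j ->
     part k i `&` part k j = set0) ->
  (forall k : nat, (1 <= k)%N -> \bigcup_(i in setT) part k i = Xk k) ->
  (* implicit in the definition of m_{i,k}: its integrand is measurable *)
  (forall (k : nat) (i : I k), (1 <= k)%N ->
     measurable_fun (Xk k) (pinf p (part k i))) ->
  0 < theta <= 1 ->
  forall k : nat, (1 <= k)%N ->
  (ereal_sup
     [set ereal_sup
            [set ((Normc.normc (Phat mu p (Xk k) (part k) x0 f x - Pop mu p f x))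
                   / v (d x x0))%:E | x in setT]
     | f in [set f : X -> R[i] | cmeasurable f /\ forall x, (Normc.normc (f x) <= 1)%R]]
   <= 2%:E * maxe ((v k%:R)^-1)%:E
        (alpha mu p (fun x => v (d x x0)) (Xk k)
         + ell mu d p (Xk k) (part k) theta * ((delta k) `^ theta)%:E))%E.
Proof.
move=> dmet _ mp p0 p1 v0 v1 vmono _ _ dpos hXk hpart hdisj hcover hpinf /andP[th0 th1] k k1.
have [mDk sub1 sub2] := hXk k k1.
set Dk := Xk k.
apply: ge_ereal_sup => _ [f [mf f1] <-].
apply: ge_ereal_sup => _ [x _ <-].
set w := (Phat _ _ _ _ _ _ _ - _).
have [a [b [ab ->]]] := lf_attain w.
case: dmet => d0 deq dsym dtri.
set V := v (d x x0).
have hV1 : 1 <= V by apply: v1.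
have hV0 : 0 < V by apply: lt_le_trans hV1; exact: ltr01.
set h := fun y => lf a b (f y).
have hh : forall y, `|h y| <= 1.
  move=> y; rewrite ler_norml; apply/andP; split.
  - rewrite lerNl; have -> : - h y = lf (-a) (-b) (f y) by rewrite /h /lf; ring.
    apply: le_trans (f1 y); apply: lf_le; by rewrite !sqrrN.
  - by apply: le_trans (f1 y); apply: lf_le.
have mh : measurable_fun setT h.
  case: mf => mre mim.
  apply: measurable_realfun.measurable_funD; apply: measurable_realfun.measurable_funM => //.
set s := p x.
have ms : measurable_fun setT s by exact: (measurableT_comp mp (pair1_measurable x)).
have is_ : mu.-integrable setT (EFin \o s).
  apply/integrableP; split; first exact/measurable_realfun.measurable_EFinP.
  under eq_integral => y _ do rewrite /= ger0_norm ?p0 //.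
  by rewrite (p1 x) ltry.
have isD : forall D, measurable D -> mu.-integrable D (EFin \o s).
  by move=> D mD; exact: (integrableS measurableT mD (@subsetT _ D) is_).
have lfPop : lf a b (Pop mu p f x) = Rintegral mu setT (fun y => h y * s y).
  by rewrite /Pop lf_cint_mul.
have S1 : Rintegral mu setT s = 1 by rewrite /Rintegral (p1 x).
have hs_int : forall D, measurable D -> mu.-integrable D (EFin \o (fun y => h y * s y)).
  move=> D mD; apply: (@Rint_bdd _ _ _ mu D h s mD).
  - exact: measurable_funS mh.
  - by move=> y _; exact: hh.
  - exact: isD.
have [xin|xout] := pselect (Dk x); last first.
  have Q0 : forall g, Qhat mu p Dk (part k) g x = 0.
    move=> g; rewrite /Qhat big1 // => i _.
    rewrite indicE (_ : (x \in part k i) = false) ?mulC0 //.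
    apply/negbTE/negP; rewrite inE => pix; apply: xout.
    by rewrite /Dk -(hcover k k1); exists i.
  have -> : w = f x0 - Pop mu p f x.
    by rewrite /w /Phat /psi !Q0 add0r subr0 mulr1.
  rewrite lfB lfPop.
  have hk : k%:R <= d x x0.
    rewrite leNgt; apply/negP => lt; apply: xout; exact: sub1.
  have hvk : 1 <= v k%:R by apply: v1.
  have hVk : v k%:R <= V by apply: vmono.
  have hle : lf a b (f x0) - Rintegral mu setT (fun y => h y * s y) <= 2.
    have e1 : lf a b (f x0) <= 1 by apply: le_trans (f1 x0); exact: lf_le.
    have e2 : 0 <= Rintegral mu setT (fun y => s y + h y * s y).
      apply: Rintegral_ge0 => y _.
      by have /andP[+ _] := @bnd_mul _ _ _ (hh y) (p0 x y); rewrite -subr_ge0 opprK addrC.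
    rewrite (RintegralD measurableT is_ (hs_int _ measurableT)) in e2.
    have S1' : Rintegral mu setT (fun y => s y) = 1 := S1.
    rewrite S1' in e2.
    lra.
  apply: (@le_trans _ _ (2%:E * ((v k%:R)^-1)%:E)%E).
    rewrite -EFinM lee_fin.
    apply: (@le_trans _ _ (2 / V)).
      by rewrite ler_wpM2r // invr_ge0 ltW.
    rewrite ler_wpM2l // lef_pV2 // posrE //; exact: lt_le_trans ltr01 hvk.
  apply: lee_wpmul2l; first by rewrite lee_fin.
  by rewrite le_max lexx.
have [i _ pix] : exists2 i, setT i & part k i x.
  by move: xin; rewrite /Dk -(hcover k k1).
set q := pinf p (part k i).
have [mpart [t0 pt0] dpart] := hpart k i k1.
have q0 : forall y, 0 <= q y.
  move=> y; apply: lb_le_inf; first by exists (p t0 y), t0.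
  by move=> _ [t _ <-]; exact: p0.
have qle : forall t y, part k i t -> q y <= p t y.
  move=> t y pt; apply: ge_inf; last by exists t.
  by exists 0; move=> _ [u _ <-]; exact: p0.
have mq : measurable_fun Dk q := hpinf k i k1.
have iq : mu.-integrable Dk (EFin \o q).
  apply: (@Rint_dom _ _ _ mu Dk q s mDk mq (isD Dk mDk)).
  by move=> y _; rewrite !ger0_norm ?q0 ?p0 //; exact: qle.
have QhatI : forall g, Qhat mu p Dk (part k) g x = mik mu p Dk (part k i) g.
  move=> g; rewrite /Qhat (bigD1 i) //= big1 => [|j ji].
    by rewrite indicE (mem_set pix) mulr1n mulC1 addr0.
  rewrite indicE (_ : (x \in part k j) = false) ?mulC0 //.
  apply/negbTE/negP; rewrite inE => pjx.
  have hne : j <> i by apply/eqP.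
  have : (part k j `&` part k i) x by split.
  by rewrite (hdisj k j i k1 hne).
set Q := Rintegral mu Dk (fun y => q y).
have mik1 : mik mu p Dk (part k i) (fun _ => 1) = Q%:C.
  rewrite /mik /cintegral; congr (_ +i* _).
    by apply: eq_Rintegral => y _; rewrite ReMC /= mul1r.
  rewrite (@eq_Rintegral _ _ _ mu Dk (fun _ => 0)); last first.
    by move=> y _; rewrite ImMC /= mul0r.
  by rewrite Rintegral_cst // mul0r.
have -> : w = mik mu p Dk (part k i) f + f x0 * (1 - Q%:C) - Pop mu p f x.
  by rewrite /w /Phat /psi !QhatI mik1.
rewrite lfB lfD lf_psi lfPop /mik (@lf_cint_mul _ _ _ mu a b Dk f q mDk mf f1 iq).
have mDc : measurable (~` Dk) := measurableC mDk.
have splitT : forall g, mu.-integrable setT (EFin \o g) ->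
    Rintegral mu setT g = Rintegral mu Dk g + Rintegral mu (~` Dk) g.
  move=> g ig; have hU : Dk `|` ~` Dk = setT := setUv Dk.
  rewrite -[in LHS]hU Rintegral_setU //.
  - by rewrite hU.
  - exact/disj_setPCl.
rewrite (splitT _ (hs_int _ measurableT)).
set Hq := Rintegral mu Dk (fun y => lf a b (f y) * q y).
set Hs := Rintegral mu Dk (fun y => h y * s y).
set Hc := Rintegral mu (~` Dk) (fun y => h y * s y).
set Sk := Rintegral mu Dk (fun y => s y).
set Sc := Rintegral mu (~` Dk) (fun y => s y).
set D1 := Rintegral mu Dk (fun y => s y - q y).
have F1 : Sk + Sc = 1.
  by rewrite -S1 (splitT _ is_).
have hq_int : mu.-integrable Dk (EFin \o (fun y => h y * q y)).
  exact: (@Rint_bdd _ _ _ mu Dk h q mDk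
    (measurable_funS measurableT (@subsetT _ Dk) mh) (fun y _ => hh y) iq).
have sq_int : mu.-integrable Dk (EFin \o (fun y => s y - q y)).
  exact: (@Rint_sub _ _ _ mu Dk s q mDk (isD Dk mDk) iq).
have F2 : D1 = Sk - Q.
  by rewrite /D1 RintegralB //; exact: isD.
have sqle : forall y, q y <= s y by move=> y; exact: qle.
have E1 : Hq - Hs <= D1.
  rewrite /Hq /Hs -RintegralB //; last exact: hs_int.
  apply: le_Rintegral => //.
  - exact: (@Rint_sub _ _ _ mu Dk _ _ mDk hq_int (hs_int _ mDk)).
  - move=> y _.
    have := @bnd_mul _ (h y) (s y - q y) (hh y).
    rewrite subr_ge0 => /(_ (sqle y)) /andP[H1 H2].
    rewrite /h in H1 H2 *; nra.
have QSk : Q <= Sk.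
  apply: le_Rintegral => //; exact: isD.
have Sc0 : 0 <= Sc by apply: Rintegral_ge0 => y _; exact: p0.
have E2 : lf a b (f x0) * (1 - Q) <= 1 - Q.
  have Q1 : 0 <= 1 - Q by lra.
  by have /andP[_ H] := @bnd_mul _ (h x0) (1 - Q) (hh x0) Q1; exact: H.
have E3 : - Hc <= Sc.
  have e2 : 0 <= Rintegral mu (~` Dk) (fun y => s y + h y * s y).
    apply: Rintegral_ge0 => y _.
    by have /andP[+ _] := @bnd_mul _ _ _ (hh y) (p0 x y); rewrite -subr_ge0 opprK addrC.
  rewrite (RintegralD mDc (isD _ mDc) (hs_int _ mDc)) in e2.
  rewrite /Hc /Sc; lra.
have main : Hq + lf a b (f x0) * (1 - Q) - (Hs + Hc) <= 2 * (D1 + Sc).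
  lra.
have D10 : 0 <= D1.
  by apply: Rintegral_ge0 => y _; rewrite subr_ge0; exact: sqle.
set dt := delta k `^ theta.
have dk0 : 0 < delta k := dpos k k1.
have dt0 : 0 < dt by apply: powR_gt0.
have G1 : ((Sc / V)%:E <= alpha mu p (fun x => v (d x x0)) Dk)%E.
  have -> : (Sc / V)%:E = (Pker mu p x (~` Dk) * (V^-1)%:E)%E.
    rewrite /Pker EFinM; congr (_ * _)%E.
    rewrite /Sc /Rintegral fineK //.
    exact: (integrable_fin_num mDc (isD _ mDc)).
  by apply: ereal_sup_ubound; exists x.
have Lpt : forall y, ((dt^-1 * (s y - q y))%:E <= Lik d p (part k i) theta y)%E.
  move=> y; rewrite /Lik; set S := (X in ereal_sup X).
  have S0 : (0 <= ereal_sup S)%E by apply: ereal_sup_ubound; left.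
  case E: (ereal_sup S) S0 => [l| |] // S0; last by rewrite leey.
  rewrite lee_fin in S0 *.
  rewrite lee_fin mulrC ler_pdivrMr //.
  suff : s y - l * dt <= q y by lra.
  apply: lb_le_inf; first by exists (p t0 y), t0.
  move=> _ [t pt <-].
  have [->|tx] := pselect (t = x).
    have : 0 <= l * dt by rewrite mulr_ge0 // ltW.
    rewrite /s; lra.
  have dxt : 0 < d x t.
    rewrite lt_neqAle d0 andbT eq_sym; apply/eqP => e0.
    by apply: tx; rewrite ((deq x t).1 e0).
  have hl : `|p x y - p t y| / (d x t) `^ theta <= l.
    rewrite -lee_fin -E; apply: ereal_sup_ubound; right; exists x, t; split => //.
    by move=> e; apply: tx; rewrite e.
  have dpt : 0 < (d x t) `^ theta by apply: powR_gt0.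
  have dtt : (d x t) `^ theta <= dt.
    apply: ge0_ler_powR; [exact: ltW | by rewrite nnegrE d0 | by rewrite nnegrE ltW |].
    exact: dpart.
  rewrite ler_pdivrMr // in hl.
  have H3 : l * (d x t) `^ theta <= l * dt by rewrite ler_wpM2l.
  have H4 := ler_norm (p x y - p t y).
  rewrite /s; lra.
have G2 : ((D1 / V)%:E <= ell mu d p Dk (part k) theta * dt%:E)%E.
  apply: (@le_trans _ _ D1%:E).
    by rewrite lee_fin ler_pdivrMr // ler_peMr.
  have key : ((dt^-1 * D1)%:E <= ell mu d p Dk (part k) theta)%E.
    apply: (le_trans _ (le_bigmax _ _ i)).
    have -> : (dt^-1 * D1)%:E = (\int[mu]_(y in Dk) ((dt^-1 * (s y - q y))%:E))%E.
      rewrite /D1 -RintegralZl //.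
      rewrite /Rintegral fineK //.
      apply: integrable_fin_num => //.
      exact: (@Rint_scale _ _ _ mu Dk _ _ mDk sq_int).
    apply: nn_le_integral => y Dy; last exact: Lpt.
    rewrite lee_fin; apply: mulr_ge0; [by rewrite invr_ge0 ltW | by rewrite subr_ge0 sqle].
  have -> : D1%:E = ((dt^-1 * D1)%:E * dt%:E)%E.
    by rewrite -EFinM mulrC mulrA divff ?mul1r // gt_eqF.
  by apply: lee_wpmul2r => //; rewrite lee_fin ltW.
apply: (@le_trans _ _ (2%:E * ((D1 / V)%:E + (Sc / V)%:E))%E).
  rewrite -EFinD -EFinM lee_fin -mulrDl mulrA.
  by apply: ler_wpM2r => //; rewrite invr_ge0 ltW.
apply: lee_wpmul2l; first by rewrite lee_fin.
rewrite le_max; apply/orP; right.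
by rewrite addeC; apply: leeD.
Qed.
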